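(* Let $G$ be a group. Jensen's equation $f(xy)+f(xy^{-1})=2f(x)$ is stable over $G$ (i.e. stable for the pair $(G;E)$ for every real Banach space $E$, equivalently for some real Banach space $E$) if and only if $PJ(G)=J_0(G)$.
   Context: For a real Banach space $E$, the equation is stable for the pair $(G;E)$ if for every $f\colon G\to E$ such that for some $c>0$, $\|f(xy)+f(xy^{-1})-2f(x)\|\le c$ for all $x,y\in G$, there exists $j\colon G\to E$ with $j(xy)+j(xy^{-1})=2j(x)$ for all $x,y$ and $j-f$ bounded. $PJ(G)$ is the space of functions $f\colon G\to\mathbb{R}$ such that for some $c>0$, $|f(xy)+f(xy^{-1})-2f(x)|\le c$ for all $x,y$, and $f(x^n)=nf(x)$ for all $x\in G$, $n\in\mathbb{Z}$. $J_0(G)$ is the space of $f\colon G\to\mathbb{R}$ with $f(xy)+f(xy^{-1})=2f(x)$ for all $x,y$ and $f(1)=0$. *)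

(* Defs.v *)
From HB Require Import structures.
From mathcomp Require Import all_boot all_order all_algebra.
From mathcomp Require Import monoid.
From mathcomp Require Import all_classical all_reals all_analysis.
From mathcomp Require Import Rstruct Rstruct_topology.
Set Implicit Arguments. Unset Strict Implicit. Unset Printing Implicit Defensive.
Import Order.TTheory GRing.Theory Num.Theory.
Import numFieldNormedType.Exports.
Local Open Scope ring_scope.

Notation RR := Rdefinitions.R.

Definition zpowg (G : groupType) (x : G) (n : int) : G :=
  match n with
  | Posz k => (x ^+ k)%g
  | Negz k => (x ^- k.+1)%g
  end.

Definition jensen_stable (G : groupType) (E : completeNormedModType RR) : Prop :=
  forall f : G -> E,
    (exists c : RR, 0 < c /\
       forall x y : G, `|f (x * y)%g + f (x * y^-1)%g - 2%:R *: f x| <= c) ->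
    exists j : G -> E,
      (forall x y : G, j (x * y)%g + j (x * y^-1)%g = 2%:R *: j x) /\
      (exists M : RR, forall x : G, `|j x - f x| <= M).

Definition PJ (G : groupType) (f : G -> RR) : Prop :=
  (exists c : RR, 0 < c /\
     forall x y : G, `|f (x * y)%g + f (x * y^-1)%g - 2 * f x| <= c) /\
  (forall (x : G) (n : int), f (zpowg x n) = n%:~R * f x).

Definition J0 (G : groupType) (f : G -> RR) : Prop :=
  (forall x y : G, f (x * y)%g + f (x * y^-1)%g = 2 * f x) /\ f 1%g = 0.

(* Main.v *)
Require Import Defs.
From HB Require Import structures.
From mathcomp Require Import all_boot all_order all_algebra.
From mathcomp Require Import monoid.
From mathcomp Require Import all_classical all_reals all_analysis.
From mathcomp Require Import Rstruct Rstruct_topology.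
From mathcomp Require Import ring lra zify.
Set Implicit Arguments. Unset Strict Implicit. Unset Printing Implicit Defensive.
Import Order.TTheory GRing.Theory Num.Theory.
Import numFieldNormedType.Exports.
Local Open Scope ring_scope.
Local Open Scope classical_set_scope.


Definition goodG (E : normedModType RR) (v : E) (A : set (E * RR)) :=
  [/\ (forall a r s, A (a, r) -> A (a, s) -> r = s),
      (forall a b r s, A (a, r) -> A (b, s) -> A (a + b, r + s)),
      (forall a r (t : RR), A (a, r) -> A (t *: a, t * r)),
      (forall a r, A (a, r) -> r <= `|a|) &
      (forall p, A p -> A (v, `|v|))].

Lemma goodG_chain (E : normedModType RR) (v : E) (F : set (set (E * RR))) : F `<=` goodG v -> total_on F subset ->
  goodG v (\bigcup_(X in F) X).
Proof.
move=> FP tot; split.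
- move=> a r s [X FX Xar] [Y FY Yas].
  have [XY|YX] := tot X Y FX FY.
  + by have [f _ _ _ _] := FP Y FY; apply: f (XY _ Xar) Yas.
  + by have [f _ _ _ _] := FP X FX; apply: f Xar (YX _ Yas).
- move=> a b r s [X FX Xar] [Y FY Ybs].
  have [XY|YX] := tot X Y FX FY.
  + by exists Y => //; have [_ f _ _ _] := FP Y FY; apply: f (XY _ Xar) Ybs.
  + by exists X => //; have [_ f _ _ _] := FP X FX; apply: f Xar (YX _ Ybs).
- move=> a r t [X FX Xar]; exists X => //.
  by have [_ _ f _ _] := FP X FX; apply: f.
- by move=> a r [X FX Xar]; have [_ _ _ f _] := FP X FX; apply: f Xar.
- by move=> p [X FX Xp]; exists X => //; have [_ _ _ _ f] := FP X FX; apply: f Xp.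
Qed.

Lemma hahn_banach (E : normedModType RR) (v : E) : v != 0 -> exists phi : E -> RR,
  (forall a b, phi (a + b) = phi a + phi b) /\ (forall a, `|phi a| <= `|a|) /\ phi v != 0.
Proof.
move=> v0.
have [A [PA maxA]] := Zorn_bigcup (@goodG_chain E v).
have [Afun Aadd Ascal Abnd Av] := PA.
pose L := [set p : E * RR | exists t : RR, p = (t *: v, t * `|v|)].
have goodL : goodG v L.
  split.
  - move=> a r s [t [-> ->]] [t' [e ->]].
    have : (t - t') *: v = 0 by rewrite scalerBl e subrr.
    move/eqP; rewrite scaler_eq0 (negbTE v0) orbF subr_eq0 => /eqP ->//.
  - move=> a b r s [t [-> ->]] [t' [-> ->]]; exists (t + t').
    by rewrite scalerDl mulrDl.
  - move=> a r u [t [-> ->]]; exists (u * t).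
    by rewrite scalerA mulrA.
  - move=> a r [t [-> ->]]; rewrite normrZ ler_wpM2r ?normr_ge0 ?ler_norm //.
  - by move=> p _; exists 1; rewrite scale1r mul1r.
have Avv : A (v, `|v|).
  apply: contrapT => nAv.
  apply: (maxA L) => //; split.
  - by move=> p /Av.
  - by move=> /(_ (v, `|v|)) H; apply: nAv; apply: H; exists 1; rewrite scale1r mul1r.
have A00 : A (0, 0).
  by have := Ascal _ _ 0 Avv; rewrite scale0r mul0r.
have dom : forall w, exists r, A (w, r).
  move=> w; apply: contrapT => ndom.
  have nA : forall r, ~ A (w, r) by move=> r Ar; apply: ndom; exists r.
  pose S := [set x : RR | exists a r, A (a, r) /\ x = r - `|a - w|].
  have S0 : S !=set0 by exists (0 - `|0 - w|); exists 0, 0.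
  have Sub : forall a r, A (a, r) -> ubound S (`|a + w| - r).
    move=> a r Aar _ [a' [r' [Aar' ->]]].
    rewrite lerBrDr addrAC lerBlDr addrC.
    apply: (le_trans (Abnd _ _ (Aadd _ _ _ _ Aar Aar'))).
    have -> : a + a' = (a + w) + (a' - w) by rewrite addrACA subrr addr0.
    exact: ler_normD.
  have hS : has_sup S by split => //; exists (`|0 + w| - 0); apply: Sub.
  pose c := sup S.
  have ci : forall a r, A (a, r) -> r - `|a - w| <= c.
    by move=> a r Aar; apply: sup_upper_bound => //; exists a, r.
  have cii : forall a r, A (a, r) -> c <= `|a + w| - r.
    by move=> a r Aar; apply: ge_sup => //; apply: Sub.
  have ext : forall a r t, A (a, r) -> r + t * c <= `|a + t *: w|.
    move=> a r t Aar.
    have [t0|tn|<-] := ltgtP 0 t.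
    - have := cii _ _ (Ascal _ _ t^-1 Aar).
      have -> : a + t *: w = t *: (t^-1 *: a + w).
        by rewrite scalerDr scalerA mulfV ?gt_eqF // scale1r.
      rewrite normrZ gtr0_norm // => H.
      have := ler_wpM2l (ltW t0) H.
      rewrite mulrBr mulrA mulfV ?gt_eqF // mul1r => H2.
      lra.
    - have s0 : 0 < - t by rewrite oppr_gt0.
      have := ci _ _ (Ascal _ _ (- t)^-1 Aar).
      have -> : (- t)^-1 *: a - w = (- t)^-1 *: (a + t *: w).
        by rewrite scalerDr scalerA invrN mulNr mulVf ?lt_eqF // scaleN1r.
      rewrite normrZ gtr0_norm ?invr_gt0 // => H.
      have := ler_wpM2l (ltW s0) H.
      rewrite mulrBr !mulrA mulfV ?gt_eqF // !mul1r => H2.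
      lra.
    - by rewrite mul0r scale0r addr0 !addr0; apply: (Abnd).
  pose B := [set p : E * RR | exists a r t, A (a, r) /\ p = (a + t *: w, r + t * c)].
  have goodB : goodG v B.
    split.
    - move=> a0 r0 s0 [a [r [t [Aar [-> ->]]]]] [a' [r' [t' [Aar' [e ->]]]]].
      have tt' : t = t'.
        apply: contrapT => /eqP; rewrite -subr_eq0 => ntt.
        apply: (nA (((t - t')^-1) * (r' - r))).
        have -> : w = (t - t')^-1 *: (a' - a).
          have h : (t - t') *: w = a' - a.
            have -> : a' = a + t *: w - t' *: w by rewrite e addrK.
            by rewrite scalerBl addrAC [a + _]addrC addrK.
          by rewrite -h scalerA mulVf // scale1r.
        apply: (Ascal); apply: (Aadd) => //.
        by have := Ascal _ _ (-1) Aar; rewrite scaleN1r mulN1r.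
      subst t'.
      have aa : a = a' by apply: (addIr (t *: w)).
      by subst a'; rewrite (Afun _ _ _ Aar Aar').
    - move=> a0 b0 r0 s0 [a [r [t [Aar [-> ->]]]]] [a' [r' [t' [Aar' [-> ->]]]]].
      exists (a + a'), (r + r'), (t + t'); split; first exact: Aadd.
      by congr pair; rewrite ?scalerDl ?mulrDl addrACA.
    - move=> a0 r0 u [a [r [t [Aar [-> ->]]]]].
      exists (u *: a), (u * r), (u * t); split; first exact: Ascal.
      by rewrite scalerDr scalerA mulrDr mulrA.
    - by move=> a0 r0 [a [r [t [Aar [-> ->]]]]]; apply: ext.
    - by move=> _ _; exists v, `|v|, 0; rewrite scale0r mul0r !addr0.
  apply: (maxA B) => //; split.
  - by move=> [a r] Aar; exists a, r, 0; rewrite scale0r mul0r !addr0.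
  - move=> BA; apply: (nA c); apply: BA; exists 0, 0, 1.
    by rewrite scale1r mul1r !add0r.
pose phi w := sval (cid (dom w)).
have Aphi : forall w, A (w, phi w) by move=> w; rewrite /phi; case: cid.
have phiE : forall w r, A (w, r) -> phi w = r by move=> w r /(Afun _ _ _ (Aphi w)).
have phiN : forall w, phi (- w) = - phi w.
  by move=> w; apply: phiE; have := Ascal _ _ (-1) (Aphi w); rewrite scaleN1r mulN1r.
exists phi; split; last split.
- by move=> a b; apply: phiE; apply: (Aadd).
- move=> a; rewrite ler_norml Abnd // andbT lerNl -phiN -normrN.
  exact: Abnd.
- by rewrite (phiE _ _ Avv) normr_eq0.
Qed.



Lemma nat_le_pow2 (n : nat) : (n%:R : RR) <= 2 ^+ n.
Proof.
elim: n => [|n IH]; first by rewrite expr0 ler01.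
rewrite exprS -natr1 mulr2n mulrDl mul1r lerD //.
by apply: exprn_ege1; lra.
Qed.

Lemma geom_lim (E : completeNormedModType RR) (u : nat -> E) (c : RR) :
  0 <= c -> (forall n, `|u n.+1 - u n| <= c / 2 ^+ n.+1) ->
  exists l, `|l - u 0%N| <= c /\
    (forall eps, 0 < eps -> exists N, forall n, (N <= n)%N -> `|l - u n| < eps).
Proof.
move=> c0 hu.
have p0 : forall n, 0 < (2 : RR) ^+ n by move=> n; apply: exprn_gt0; lra.
have key : forall n k, `|u (n + k)%N - u n| <= c / 2 ^+ n - c / 2 ^+ (n + k).
  move=> n; elim=> [|k IH]; first by rewrite addn0 subrr normr0 subrr.
  rewrite addnS.
  have -> : u (n + k).+1 - u n = (u (n + k).+1 - u (n + k)%N) + (u (n + k)%N - u n).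
    by rewrite addrA addrNK.
  apply: (le_trans (ler_normD _ _)).
  have h1 := hu (n + k)%N.
  have e : c / 2 ^+ (n + k) = 2 * (c / 2 ^+ (n + k).+1).
    by rewrite exprS; field; rewrite gt_eqF.
  lra.
have key2 : forall n m, (n <= m)%N -> `|u m - u n| <= c / 2 ^+ n.
  move=> n m /subnKC <-; apply: (le_trans (key n (m - n)%N)).
  rewrite lerBlDr lerDl; apply: divr_ge0 => //; exact: ltW.
have cv : cvg (u @ \oo).
  apply/cauchy_cvgP/cauchy_exP => eps eps0.
  have ce : 0 <= c / eps by apply: divr_ge0 => //; exact: ltW.
  set N := Num.Def.archi_bound (c / eps).
  have hN := archi_boundP ce.
  exists (u N); exists N => // n /= Nn.
  rewrite -ball_normE /ball_ /=.
  rewrite distrC; apply: (le_lt_trans (key2 _ _ Nn)).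
  rewrite ltr_pdivrMr // mulrC.
  rewrite ltr_pdivrMr // in hN.
  apply: (lt_le_trans hN); rewrite ler_pM2r //.
  exact: nat_le_pow2.
exists (lim (u @ \oo)).
have ev : forall eps, 0 < eps -> exists N, forall n, (N <= n)%N -> `|lim (u @ \oo) - u n| < eps.
  move=> eps eps0; have := (cvgrPdist_lt _ _).1 cv eps eps0.
  by case=> N _ HN; exists N => n Nn; apply: HN.
split => //.
apply/ler_addgt0Pr => eps eps0.
have [N HN] := ev eps eps0.
have h1 := HN N (leqnn N).
have h2 := key2 0%N N (leq0n N).
rewrite expr0 divr1 in h2.
have : `|lim (u @ \oo) - u 0%N| <= `|lim (u @ \oo) - u N| + `|u N - u 0%N|.
  by rewrite [X in `|X| <= _](_ : _ = (lim (u @ \oo) - u N) + (u N - u 0%N)) ?ler_normD // addrA addrNK.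
lra.
Qed.



Lemma arch0 (a K : RR) : 0 <= a -> (forall n : nat, n%:R * a <= K) -> a = 0.
Proof.
move=> a0 h; apply: contrapT => /eqP an0.
have ap : 0 < a by rewrite lt_def an0.
have K0 : 0 <= K by have := h 0%N; rewrite mul0r.
have Ka : 0 <= K / a by apply: divr_ge0 => //; exact: ltW.
have := archi_boundP Ka; rewrite ltr_pdivrMr // => hK.
have := h (Num.Def.archi_bound (K / a)); lra.
Qed.


Lemma homog_of (G : groupType) (g : G -> RR) :
  (forall x k, g (x ^+ k)%g = k%:R * g x) -> (forall x, g (x^-1)%g = - g x) ->
  forall x n, g (zpowg x n) = n%:~R * g x.
Proof.
move=> hk hi x [k|k] /=; first exact: hk.
by rewrite hi hk NegzE intrN mulNr.
Qed.

Lemma J0_homog (G : groupType) (f : G -> RR) : J0 f -> forall x n, f (zpowg x n) = n%:~R * f x.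
Proof.
move=> [hJ h1]; apply: homog_of.
- move=> x k.
  suff : f (x ^+ k)%g = k%:R * f x /\ f (x ^+ k.+1)%g = k.+1%:R * f x by case.
  elim: k => [|k [IH1 IH2]]; first by rewrite expg0 h1 mul0r expg1 mul1r.
  split => //.
  have := hJ (x ^+ k.+1)%g x.
  rewrite -expgSr [X in f (X / x)%g]expgSr mulgK IH1 IH2 => H.
  have -> : f (x ^+ k.+2)%g = 2 * (k.+1%:R * f x) - k%:R * f x by lra.
  rewrite -[k.+2]addn2 -[k.+1]addn1 !natrD; ring.
- move=> y; have := hJ 1%g y; rewrite !mul1g h1 mulr0; lra.
Qed.

Lemma J0_PJ (G : groupType) (f : G -> RR) : J0 f -> PJ f.
Proof.
move=> hJ; split; last exact: J0_homog.
exists 1; split => // x y; have [-> _] := hJ; rewrite subrr normr0; lra.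
Qed.

Lemma dbl0 (G : groupType) (E : normedModType RR) (H : G -> E) (K : RR) :
  (forall x, H (x ^+ 2)%g = 2%:R *: H x) -> (forall x, `|H x| <= K) ->
  forall x, H x = 0.
Proof.
move=> h2 hK x.
have hp : forall n, H (x ^+ (2 ^ n))%g = 2 ^+ n *: H x.
  elim=> [|n IH]; first by rewrite expn0 expg1 expr0 scale1r.
  by rewrite expnSr expgnA h2 IH scalerA exprSr mulrC.
apply/eqP; rewrite -normr_eq0; apply/eqP; apply: (arch0 (K := K)) => // n.
apply: (le_trans _ (hK (x ^+ (2 ^ n))%g)).
rewrite hp normrZ ger0_norm ?exprn_ge0 //.
apply: ler_wpM2r => //; elim: n => [|n IH]; first by rewrite expr0 ler01.
rewrite exprS -natr1 mulr2n mulrDl mul1r lerD //.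
by apply: exprn_ege1; lra.
Qed.

Lemma PJ_J0_of_stable (G : groupType) : jensen_stable G RR^o -> forall f : G -> RR, PJ f -> J0 f.
Proof.
move=> hs f [[c [c0 hc]] hom].
have [j [hj [M hM]]] := hs f (ex_intro _ c (conj c0 hc)).
pose g x := j x - j 1%g.
have gJ : J0 g.
  split; last by rewrite /g subrr.
  move=> x y; rewrite /g; have := hj x y; rewrite /GRing.scale /=; lra.
have gh := J0_homog gJ.
have hb : forall y, `|g y - f y| <= M + `|j 1%g|.
  move=> y; rewrite /g.
  have -> : j y - j 1%g - f y = (j y - f y) + (- j 1%g) by ring.
  by apply: (le_trans (ler_normD _ _)); rewrite normrN lerD2r; apply: hM.
have fg : forall x, f x = g x.
  move=> x; apply/eqP; rewrite eq_sym -subr_eq0 -normr_eq0; apply/eqP.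
  apply: (arch0 (K := M + `|j 1%g|)) => // n.
  have := hb (x ^+ n)%g.
  have := gh x n; have := hom x n; rewrite /= => -> ->.
  by rewrite -mulrBr normrM ger0_norm.
split; first by move=> x y; rewrite !fg; case: gJ.
by rewrite fg; case: gJ.
Qed.




Lemma idI1 (K : pzRingType) (V : lmodType K) (a b c k : V) : (a - k) + (b - k) - 2%:R *: (c - k) = a + b - 2%:R *: c.
Proof.
rewrite !scaler_nat !mulr2n addrACA [(c - k) + _]addrACA -!opprD opprB addrA addrNK //.
Qed.

Lemma idI2 (K : pzRingType) (V : lmodType K) (a b c x : V) : a - b - x = (a + c - 2%:R *: b) + (b - c - x).
Proof.
by rewrite scaler_nat mulr2n !opprD !addrA addrNK [a + c - b]addrAC addrK.
Qed.

Lemma idI3 (K : pzRingType) (V : lmodType K) (a b x : V) (m : nat) : a - x *+ m.+1 = (a - b - x) + (b - x *+ m).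
Proof. by rewrite mulrSr !opprD !addrA [a - b - x + b]addrAC addrNK addrAC. Qed.

Lemma idI5 (K : pzRingType) (V : lmodType K) (F2 F u2 u1 : V) : u2 = 2%:R *: u1 ->
  F2 - 2%:R *: F = (F2 - u2) + 2%:R *: (u1 - F).
Proof. by move=> ->; rewrite scalerBr addrA addrNK. Qed.

Lemma idI6 (K : pzRingType) (V : lmodType K) (Fm gm gx Fx : V) (m : nat) :
  Fm - Fx *+ m = (Fm - gm) + (gm - gx *+ m) + (gx - Fx) *+ m.
Proof. by rewrite mulrnBl [(Fm - gm) + _]addrA addrNK addrA addrNK. Qed.

Lemma idI7 (K : pzRingType) (V : lmodType K) (Fi gi gx Fx : V) : Fi + Fx = (Fi - gi) + (gi + gx) + (Fx - gx).
Proof. by rewrite [(Fi - gi) + _]addrA addrNK -addrA [gx + _]addrCA subrr addr0. Qed.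

Lemma sub4 (K : pzRingType) (V : lmodType K) (X P Y Q : V) : X - P = (Y - Q) + ((X - Y) - (P - Q)).
Proof.
by rewrite opprB addrA [(Y - Q) + _]addrC [(X - Y) + _]addrA addrNK addrA addrNK.
Qed.

Lemma idI8 (K : pzRingType) (V : lmodType K) (Fa Fb Fc ga gb gc : V) :
  Fa + Fb - 2%:R *: Fc =
  (ga + gb - 2%:R *: gc) + ((Fa - ga) + (Fb - gb) - 2%:R *: (Fc - gc)).
Proof. by rewrite scalerBr [(Fa - ga) + _]addrACA -opprD; apply: sub4. Qed.

Lemma idI12 (K : pzRingType) (V : lmodType K) (Fa Fb Fc k : V) : Fa + Fb = 2%:R *: Fc ->
  (Fa + k) + (Fb + k) = 2%:R *: (Fc + k).
Proof. by move=> e; rewrite addrACA e scalerDr [2%:R *: k]scaler_nat mulr2n. Qed.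

Lemma idI11 (K : pzRingType) (V : lmodType K) (F f g k : V) : g = f - k -> (F + k) - f = F - g.
Proof. by move=> ->; rewrite opprB addrA. Qed.

Lemma stable_of_PJ (G : groupType) (E : completeNormedModType RR) :
  (forall f : G -> RR, PJ f -> J0 f) -> jensen_stable G E.
Proof.
move=> hyp f [c [c0 hc]].
pose g x := f x - f 1%g.
have hg : forall x y, `|g (x * y)%g + g (x * y^-1)%g - 2%:R *: g x| <= c.
  by move=> x y; rewrite /g idI1.
have g1 : g 1%g = 0 by rewrite /g subrr.
have gsq : forall x, `|g (x ^+ 2)%g - 2%:R *: g x| <= c.
  by move=> x; have := hg x x; rewrite mulgV g1 addr0 -expg2.
have ginv : forall y, `|g y + g (y^-1)%g| <= c.
  by move=> y; have := hg 1%g y; rewrite !mul1g g1 scaler0 subr0.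
have gA : forall x m, `|g (x ^+ m.+1)%g - g (x ^+ m)%g - g x| <= m%:R * c.
  move=> x; elim=> [|m IH]; first by rewrite expg1 expg0 g1 subr0 subrr normr0 mul0r.
  rewrite (idI2 _ _ (g (x ^+ m)%g)).
  apply: (le_trans (ler_normD _ _)).
  have := hg (x ^+ m.+1)%g x; rewrite -expgSr [X in g (X / x)%g]expgSr mulgK => h.
  have -> : m.+1%:R * c = m%:R * c + c by rewrite mulrSr mulrDl mul1r.
  lra.
have gB : forall x m, `|g (x ^+ m)%g - g x *+ m| <= (m * m)%:R * c.
  move=> x; elim=> [|m IH]; first by rewrite expg0 g1 mulr0n subr0 normr0 mul0r.
  rewrite (idI3 _ (g (x ^+ m)%g)); apply: (le_trans (ler_normD _ _)).
  apply: (le_trans (lerD (gA x m) IH)).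
  rewrite -mulrDl -natrD; apply: ler_wpM2r; [exact: ltW | rewrite ler_nat; lia].
pose u x n := (2 ^+ n : RR)^-1 *: g (x ^+ (2 ^ n))%g.
have p0 : forall n, 0 < (2 : RR) ^+ n by move=> n; apply: exprn_gt0; lra.
have useq : forall x n, `|u x n.+1 - u x n| <= c / 2 ^+ n.+1.
  move=> x n; rewrite /u expnSr expgnA.
  set y := (x ^+ (2 ^ n))%g.
  have -> : (2 ^+ n.+1 : RR)^-1 *: g (y ^+ 2)%g - (2 ^+ n)^-1 *: g y =
      (2 ^+ n.+1 : RR)^-1 *: (g (y ^+ 2)%g - 2%:R *: g y).
    rewrite [RHS]scalerBr [in RHS]scalerA; congr (_ - _ *: _).
    by rewrite exprS; field; rewrite gt_eqF.
  rewrite normrZ ger0_norm; last by rewrite invr_ge0 ltW.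
  rewrite [c / _]mulrC; apply: ler_wpM2l; last exact: gsq.
  by rewrite invr_ge0 ltW.
have u0 : forall x, u x 0%N = g x by move=> x; rewrite /u expr0 invr1 scale1r expn0 expg1.
have Fex : forall x, exists l, `|l - g x| <= c /\
    (forall eps, 0 < eps -> exists N, forall n, (N <= n)%N -> `|l - u x n| < eps).
  move=> x; have [l [h1 h2]] := geom_lim (ltW c0) (useq x).
  by exists l; rewrite -u0; split.
pose F x := sval (cid (Fex x)).
have FP : forall x, `|F x - g x| <= c /\
    (forall eps, 0 < eps -> exists N, forall n, (N <= n)%N -> `|F x - u x n| < eps).
  by move=> x; rewrite /F; case: cid.
have Fg : forall x, `|F x - g x| <= c by move=> x; case: (FP x).
have Fu : forall x eps, 0 < eps -> exists N, forall n, (N <= n)%N -> `|F x - u x n| < eps.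
  by move=> x; case: (FP x).
have F2 : forall x, F (x ^+ 2)%g = 2%:R *: F x.
  move=> x; apply/eqP; rewrite -subr_eq0 -normr_eq0 eq_le normr_ge0 andbT.
  apply/ler_addgt0Pr => eps eps0; rewrite add0r.
  have e0 : 0 < eps / 3 by apply: divr_gt0 => //; lra.
  have [N1 h1] := Fu (x ^+ 2)%g _ e0.
  have [N2 h2] := Fu x _ e0.
  pose n := maxn N1 N2.
  have hu : u (x ^+ 2)%g n = 2%:R *: u x n.+1.
    rewrite /u -expgnA -expnS scalerA; congr (_ *: _).
    by rewrite exprS; field; rewrite gt_eqF.
  rewrite (idI5 (F (x ^+ 2)%g) (F x) hu).
  apply: (le_trans (ler_normD _ _)).
  rewrite normrZ [`|u x _ - _|]distrC.
  have := h1 n (leq_maxl _ _).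
  have := h2 n.+1 (leqW (leq_maxr _ _)).
  rewrite ger0_norm; last lra.
  lra.
have Fk : forall x m, F (x ^+ m)%g = F x *+ m.
  move=> x m; pose H y := F (y ^+ m)%g - F y *+ m.
  suff : H x = 0 by move/eqP; rewrite subr_eq0 => /eqP.
  apply: (dbl0 (K := c + (m * m)%:R * c + m%:R * c)) => y.
  - by rewrite /H expgnAC F2 F2 scalerBr scalerMnr.
  - rewrite /H (idI6 _ (g (y ^+ m)%g) (g y)).
    apply: (le_trans (ler_normD _ _)); apply: lerD.
      apply: (le_trans (ler_normD _ _)); apply: lerD; [exact: Fg | exact: gB].
    rewrite normrMn distrC -[_ *+ m]mulr_natl; apply: ler_wpM2l => //; exact: Fg.
have Finv : forall x, F (x^-1)%g = - F x.
  move=> x; pose H y := F (y^-1)%g + F y.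
  suff : H x = 0 by move/eqP; rewrite addr_eq0 => /eqP.
  apply: (dbl0 (K := c + c + c)) => y.
  - by rewrite /H -expVgn !F2 scalerDr.
  - rewrite /H (idI7 _ (g (y^-1)%g) (g y)).
    apply: (le_trans (ler_normD _ _)); apply: lerD; last exact: Fg.
    apply: (le_trans (ler_normD _ _)); apply: lerD; [exact: Fg | by rewrite addrC; exact: ginv].
have Fdef : forall x y, `|F (x * y)%g + F (x * y^-1)%g - 2%:R *: F x| <= 5 * c.
  move=> x y; rewrite (idI8 _ _ _ (g (x * y)%g) (g (x * y^-1)%g) (g x)).
  apply: (le_trans (ler_normD _ _)).
  have h1 := hg x y; have h2 := Fg (x * y)%g; have h3 := Fg (x * y^-1)%g; have h4 := Fg x.
  have := ler_normB ((F (x * y)%g - g (x * y)%g) + (F (x * y^-1)%g - g (x * y^-1)%g))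
     (2%:R *: (F x - g x)).
  have := ler_normD (F (x * y)%g - g (x * y)%g) (F (x * y^-1)%g - g (x * y^-1)%g).
  rewrite normrZ ger0_norm; last lra.
  lra.
have FJ : forall x y, F (x * y)%g + F (x * y^-1)%g = 2%:R *: F x.
  move=> x y; apply/eqP; rewrite -subr_eq0; apply/negPn/negP => D0.
  have [phi [phiD [phiB phiv]]] := hahn_banach D0.
  have phi0 : phi 0 = 0.
    by have := phiD 0 0; rewrite addr0; lra.
  have phiN : forall a, phi (- a) = - phi a.
    by move=> a; have := phiD a (- a); rewrite subrr phi0; lra.
  have phiMn : forall a k, phi (a *+ k) = phi a *+ k.
    move=> a; elim=> [|k IH]; first by rewrite !mulr0n phi0.
    by rewrite !mulrS phiD IH.
  have phi2 : forall a b d, phi (a + b - 2%:R *: d) = phi a + phi b - 2 * phi d.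
    move=> a b d; rewrite phiD phiN phiD scaler_nat phiMn mulr_natl //.
  pose psi x := phi (F x).
  have : J0 psi.
    apply: hyp; split.
      exists (5 * c); split; first lra.
      move=> x' y'; rewrite /psi -phi2; apply: (le_trans (phiB _)); exact: Fdef.
    apply: homog_of => [x' k|x']; rewrite /psi ?Fk ?Finv ?phiMn ?phiN // mulr_natl //.
  case=> hJ _; have := hJ x y; rewrite /psi => e.
  by move: phiv; rewrite phi2 e subrr eqxx.
exists (fun x => F x + f 1%g); split.
- by move=> x y; apply: idI12; exact: FJ.
- by exists c => x; rewrite (@idI11 _ _ (F x) (f x) (g x) (f 1%g)).
Qed.

Theorem corollary3p3 (G : groupType) :
  (forall E : completeNormedModType RR, jensen_stable G E) <->
  (forall f : G -> RR, PJ f <-> J0 f).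
Proof.
split.
- move=> hs f; split; [exact: (PJ_J0_of_stable (hs RR^o)) | exact: J0_PJ].
- by move=> h E; apply: stable_of_PJ => f /h.
Qed.
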